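(* Let $a<b$ be real numbers, $I=(a,b)$, and let $(X_t)_{t\in[0,1]}$ be a real-valued stochastic process with continuous sample paths such that $\mathbb{P}(X_t\in I)\le\epsilon$ for each $t\in[0,1]$. Suppose there exist $\alpha,\beta>0$ such that for all $\theta,\delta>0$, $\mathbb{P}(\kappa_X(\delta)\ge\theta)\lesssim\delta^\alpha/\theta^\beta$. Then $$\mathbb{P}\big(N_X(a,b)\ge1\big)\lesssim\Big(\frac{\epsilon^\alpha}{(b-a)^\beta}\Big)^{\frac{1}{\alpha+1}},$$ where the implicit constant depends on $\alpha$ (and on the implicit constant in the hypothesis).
   Context: The modulus of continuity of the process is the random variable $\kappa_X(\delta;\omega)=\sup\{|X_t(\omega)-X_s(\omega)|: t,s\in[0,1],\,|t-s|\le\delta\}$. The up-crossing number is $N_X(a,b;\omega)=\sup\{n\in\mathbb{N}:\exists\,t_1<s_1<t_2<s_2<\dots<t_n<s_n\in[0,1]\text{ with }X_{t_i}(\omega)\le a<b\le X_{s_i}(\omega)\text{ for each }i\}$. $\lesssim$ means inequality up to a multiplicative constant. *)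

(* Defs.v *)
From HB Require Import structures.
From mathcomp Require Import all_boot all_order all_algebra.
From mathcomp Require Import all_classical all_reals all_analysis.
Set Implicit Arguments. Unset Strict Implicit. Unset Printing Implicit Defensive.
Import Order.TTheory GRing.Theory Num.Def Num.Theory numFieldNormedType.Exports.
Local Open Scope classical_set_scope.
Local Open Scope ring_scope.

(* A real-valued process (X_t)_{t in [0,1]} on a sample space T is represented
   by X : R -> T -> R; only the values X t for t in [0,1] are ever used. *)

Definition modulus {R : realType} {T : Type} (X : R -> T -> R) (delta : R) (w : T)
  : \bar R :=
  ereal_sup [set x : \bar R | exists t s : R,
    [/\ 0 <= t <= 1, 0 <= s <= 1, `|t - s| <= delta & x = (`|X t w - X s w|)%:E]].

Definition has_upcrossings {R : realType} {T : Type} (X : R -> T -> R)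
  (a b : R) (w : T) (n : nat) : Prop :=
  exists t s : nat -> R,
    (forall i, (i < n)%N ->
       [/\ 0 <= t i, t i < s i, s i <= 1, X (t i) w <= a & b <= X (s i) w]) /\
    (forall i, (i.+1 < n)%N -> s i < t i.+1).

Definition upcrossings {R : realType} {T : Type} (X : R -> T -> R)
  (a b : R) (w : T) : \bar R :=
  ereal_sup [set (n%:R)%:E | n in [set n : nat | has_upcrossings X a b w n]].

(* Main.v *)
From HB Require Import structures.
From mathcomp Require Import all_boot all_order all_algebra.
From mathcomp Require Import all_classical all_reals all_analysis.
From mathcomp Require Import ring lra.
Require Import Defs.
Import Order.TTheory GRing.Theory Num.Def Num.Theory numFieldNormedType.Exports.
Local Open Scope ring_scope.
Lemma powRVl (R : realType) (m a : R) : 0 < m -> m^-1 `^ a = (m `^ a)^-1.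
Proof.
move=> m0.
have ma0 : m `^ a != 0 by rewrite gt_eqF // powR_gt0.
apply: (mulfI ma0); rewrite mulfV // -powRM ?invr_ge0 ?ltW // mulfV ?gt_eqF //.
by rewrite powR1.
Qed.

Lemma arith (R : realType) (al Cc u e p : R) :
  0 < al -> 0 < Cc -> 0 < u -> 0 <= e -> 0 <= p -> p <= Cc * u ->
  (forall n : nat, p <= Cc * u * (n.+1%:R^-1) `^ al + n.+2%:R * e) ->
  p <= (Cc + 3) * (e `^ al * u) `^ (al + 1)^-1.
Proof.
move=> al0 C0 u0 e0 p0 h1 h2.
have al1 : 0 < al + 1 by rewrite addr_gt0.
set r := (al + 1)^-1.
have r0 : 0 < r by rewrite invr_gt0.
have ralr : al * r + r = 1.
  by rewrite -[X in _ + X]mul1r -mulrDl mulfV // gt_eqF.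
have [e00|ep] := eqVneq e 0.
  rewrite e00 in h2 *.
  rewrite powR0 ?gt_eqF // mul0r powR0 ?gt_eqF // mulr0.
  rewrite leNgt; apply/negP => pp.
  set y := (Cc * u / p) `^ al^-1.
  have y0 : 0 <= y by apply: powR_ge0.
  have := h2 (trunc y); rewrite mulr0 addr0 => h4.
  have hy : y < (trunc y).+1%:R by apply: truncnS_gt.
  set m := (trunc y).+1%:R in hy *.
  have m0 : 0 < m by apply: le_lt_trans hy.
  have : Cc * u / p < m `^ al.
    have -> : Cc * u / p = y `^ al.
      rewrite /y -powRrM mulVf ?gt_eqF // powRr1 // divr_ge0 // mulr_ge0 // ltW //.
    by apply: gt0_ltr_powR => //; rewrite ?inE /= ?posrE ?nnegrE ?ltW.
  rewrite ltr_pdivrMr // => h3.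
  move: h4; rewrite powRVl // => h4.
  have ma0 : 0 < m `^ al by rewrite powR_gt0.
  move: h4; rewrite ler_pdivlMr // => h4.
  by move: (le_lt_trans h4 h3); rewrite mulrC ltxx.
have e0' : 0 < e by rewrite lt_def ep.
set x := e `^ r. set y := u `^ r.
have x0 : 0 < x by rewrite powR_gt0.
have y0 : 0 < y by rewrite powR_gt0.
have ex : e = x `^ (al + 1) by rewrite /x -powRrM mulVf ?gt_eqF // powRr1 // ltW.
have uy : u = y `^ (al + 1) by rewrite /y -powRrM mulVf ?gt_eqF // powRr1 // ltW.
have T : (e `^ al * u) `^ r = x `^ al * y.
  rewrite powRM; [|exact: powR_ge0|exact: ltW u0].
  by rewrite /x /y -!powRrM (mulrC r al).

have pD (z : R) : 0 < z -> z `^ (al + 1) = z `^ al * z.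
  by move=> z0; rewrite powRD ?gt_eqF ?implybT // powRr1 // ltW.
rewrite T.
clearbody x y.
have x0' := ltW x0. have y0' := ltW y0. have u0' := ltW u0. have C0' := ltW C0.
have xal0 : 0 < x `^ al by rewrite powR_gt0.
have xal0' := ltW xal0.
have [le_ue|lt_eu] := leP u e.
  have yx : y <= x.
    move: le_ue; rewrite ex uy; apply: contraTT; rewrite -!ltNge => yx.
    by apply: (gt0_ltr_powR al1); rewrite ?nnegrE.
  apply: (le_trans h1); rewrite mulrDl.
  apply: (@le_trans _ _ (Cc * (x `^ al * y))); last first.
    by rewrite lerDl mulr_ge0 // mulr_ge0.
  rewrite ler_pM2l // uy pD // ler_pM2r //.
  by apply: (ge0_ler_powR (ltW al0)); rewrite ?nnegrE.
have xy : x < y.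
  move: lt_eu; rewrite ex uy; apply: contraTT; rewrite -!leNgt => yx.
  by apply: (ge0_ler_powR (ltW al1)); rewrite ?nnegrE.
set n := trunc (y / x).
have hn : y / x < n.+1%:R by apply: truncnS_gt.
apply: (le_trans (h2 n)).
set m := n.+1%:R in hn *.
have m0 : 0 < m by apply: le_lt_trans hn; rewrite divr_ge0.
have hm : m^-1 < x / y.
  by rewrite -[x / y]invf_div ltf_pV2 ?posrE ?divr_gt0.
have h3 : Cc * u * m^-1 `^ al <= Cc * (x `^ al * y).
  rewrite -mulrA ler_pM2l //.
  apply: (@le_trans _ _ (u * (x / y) `^ al)).
    rewrite ler_pM2l //; apply: (ge0_ler_powR (ltW al0)); rewrite ?nnegrE ?invr_ge0 ?divr_ge0 ?ltW //.
  rewrite powRM ?invr_ge0 // powRVl // uy pD //.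
  have ya0 : y `^ al != 0 by rewrite gt_eqF // powR_gt0.
  suff -> : y `^ al * y * (x `^ al / y `^ al) = x `^ al * y by [].
  by field.
have h4 : n.+2%:R * e <= 3 * (x `^ al * y).
  have -> : n.+2%:R = m + 1 :> R by rewrite /m -natr1.
  rewrite ex pD //.
  have hm2 : m <= y / x + 1.
    rewrite /m -natr1 lerD2r.
    by rewrite truncn_le divr_ge0.
  have hA : 0 <= x `^ al * x by rewrite mulr_ge0.
  have h5 : m * (x `^ al * x) <= (y / x + 1) * (x `^ al * x) by rewrite ler_wpM2r.
  have h6 : (y / x + 1) * (x `^ al * x) = x `^ al * y + x `^ al * x.
    by field; rewrite gt_eqF.
  have hxy : x `^ al * x <= x `^ al * y by rewrite ler_pM2l // ltW.
  rewrite h6 in h5; rewrite mulrDl mul1r.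
  move: h5 hxy; move: (m * (x `^ al * x)) (x `^ al * x) (x `^ al * y) => M A B.
  lra.
by apply: (le_trans (lerD h3 h4)); rewrite -mulrDl.
Qed.
Local Open Scope classical_set_scope.
Lemma cover_path (R : realType) (f : R -> R) (a b : R) (n : nat) (t0 s0 : R) :
  0 <= t0 -> t0 < s0 -> s0 <= 1 -> f t0 <= a -> b <= f s0 ->
  (forall t s, 0 <= t <= 1 -> 0 <= s <= 1 -> `|t - s| <= n.+1%:R^-1 ->
     `|f t - f s| < b - a) ->
  exists k, (k <= n.+1)%N /\ a < f (k%:R / n.+1%:R) < b.
Proof.
move=> t00 ts s01 ft fs hk.
apply: contrapT => hno.
have hno' k : (k <= n.+1)%N -> f (k%:R / n.+1%:R) <= a \/ b <= f (k%:R / n.+1%:R).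
  move=> kn; have [fa|af] := leP (f (k%:R / n.+1%:R)) a; first by left.
  have [fb|bf] := leP b (f (k%:R / n.+1%:R)); first by right.
  by exfalso; apply: hno; exists k; rewrite af bf.
set K : R := n.+1%:R.
have K0 : 0 < K by rewrite ltr0n.
have gS k : (k.+1)%:R / K - k%:R / K = K^-1.
  by rewrite -mulrBl -natr1 addrAC subrr add0r mul1r.
have g0 k : 0 <= k%:R / K by rewrite divr_ge0 // ltW.
have claim k : (k <= n.+1)%N -> k%:R / K <= s0 -> k%:R / K < t0 \/ f (k%:R / K) <= a.
  elim: k => [|k IH] kn ks.
    rewrite mul0r; have [t0p|] := ltP 0 t0; first by left.
    move=> t0le; right; have -> : (0 : R) = t0 by apply/eqP; rewrite eq_le t0le t00.
    by [].
  have [lt|le] := ltP (k.+1%:R / K) t0; first by left.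
  right.
  have gk1 : k.+1%:R / K <= 1 by apply: (le_trans ks).
  have gkk : k%:R / K <= k.+1%:R / K by rewrite ler_pM2r ?invr_gt0 // ler_nat.
  have hlt : f (k.+1%:R / K) < b.
    have [lt'|fa] := IH (ltnW kn) (le_trans gkk ks).
      have := hk (k.+1%:R / K) t0.
      rewrite g0 gk1 t00 (le_trans (ltW ts) s01) => /(_ isT isT).
      have hd : `|k.+1%:R / K - t0| <= K^-1.
        by rewrite ger0_norm ?subr_ge0 // -[X in _ <= X](gS k) lerD2l lerN2 ltW.
      move=> /(_ hd) /(le_lt_trans (ler_norm _)).
      rewrite ltrBlDr => h; apply: (lt_le_trans h); rewrite -lerBrDr.
      by rewrite lerD2l lerN2.
    have := hk (k.+1%:R / K) (k%:R / K).
    rewrite g0 gk1 g0 (le_trans gkk gk1) => /(_ isT isT).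
    rewrite gS ger0_norm; last by rewrite invr_ge0 ltW.
    move=> /(_ (lexx _)) /(le_lt_trans (ler_norm _)).
    rewrite ltrBlDr => h; apply: (lt_le_trans h).
    by lra.
  have [//|bf] := hno' k.+1 kn.
  by move: (le_lt_trans bf hlt); rewrite ltxx.
set k := trunc (s0 * K).
have s00 : 0 <= s0 by apply: (le_trans t00); rewrite ltW.
have sK0 : 0 <= s0 * K by rewrite mulr_ge0 // ltW.
have kle : k%:R <= s0 * K by rewrite truncn_le.
have klt : s0 * K < k.+1%:R by apply: truncnS_gt.
have kn : (k <= n.+1)%N.
  rewrite -ltnS -(ltr_nat R); apply: (le_lt_trans kle).
  have : s0 * K <= K by rewrite ler_piMl // ltW.
  rewrite -[n.+2%:R]natr1 -/K; lra.
have ks : k%:R / K <= s0 by rewrite ler_pdivrMr.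
have sk : s0 - k%:R / K < K^-1.
  rewrite -(ltr_pM2r K0) mulrBl divfK ?gt_eqF // mulVf ?gt_eqF //.
  move: klt; rewrite -natr1; lra.
have s1 : 0 <= s0 <= 1 by rewrite s00 s01.
have hkK : forall t s : R, 0 <= t <= 1 -> 0 <= s <= 1 -> `|t - s| <= K^-1 -> `|f t - f s| < b - a := hk.
clearbody k K.
have [lt|fa] := claim k kn ks.
  have := hkK t0 s0; rewrite t00 (le_trans (ltW ts) s01) s1 => /(_ isT isT).
  have hd : `|t0 - s0| <= K^-1 by rewrite distrC ger0_norm; lra.
  move=> /(_ hd); rewrite distrC => h.
  have := ler_norm (f s0 - f t0); lra.
have := hkK s0 (k%:R / K); rewrite s1 g0 (le_trans ks s01) => /(_ isT isT).
have hd : `|s0 - k%:R / K| <= K^-1 by rewrite ger0_norm; lra.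
move=> /(_ hd) h.
have := ler_norm (f s0 - f (k%:R / K)); lra.
Qed.
Lemma mod_le (R : realType) (T : Type) (X : R -> T -> R) (dl : R) w t s :
  0 <= t <= 1 -> 0 <= s <= 1 -> `|t - s| <= dl ->
  ((`|X t w - X s w|)%:E <= modulus X dl w)%E.
Proof.
move=> ht hs hts; apply: ereal_sup_ubound; exists t, s; split => //.
Qed.

Lemma not_mod (R : realType) (T : Type) (X : R -> T -> R) (th dl : R) w :
  ~ (th%:E <= modulus X dl w)%E ->
  forall t s, 0 <= t <= 1 -> 0 <= s <= 1 -> `|t - s| <= dl ->
  `|X t w - X s w| < th.
Proof.
move=> /negP; rewrite -ltNge => hm t s ht hs hts.
by rewrite -lte_fin; apply: le_lt_trans hm; apply: mod_le.
Qed.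

Lemma upc_eq (R : realType) (T : Type) (X : R -> T -> R) (a b : R) w :
  (1 <= upcrossings X a b w)%E <->
  exists t s : R, [/\ 0 <= t, t < s, s <= 1, X t w <= a & b <= X s w].
Proof.
split.
  move=> h; apply: contrapT => hno; move: h; apply/negP; rewrite -ltNge.
  apply: (@le_lt_trans _ _ 0%E); last by rewrite lte_fin ltr01.
  apply: ge_ereal_sup => _ [n hn <-].
  case: n hn => [|n] hn; first by rewrite lee_fin.
  exfalso; apply: hno; case: hn => t [s [hts _]].
  have [t0 ts s1 ta bs] := hts 0%N (ltn0Sn n).
  by exists (t 0%N), (s 0%N); split.
move=> [t [s [t0 ts s1 ta bs]]].
have -> : (1%E : \bar R) = (1%:R)%:E by [].
apply: ereal_sup_ubound; exists 1%N => //.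
exists (fun=> t), (fun=> s); split => // i; case: i => // _; split.
Qed.
Lemma small_inv (R : realType) (dd : R) : 0 < dd -> exists N : nat, N.+1%:R^-1 < dd.
Proof.
move=> d0; exists (trunc dd^-1).
have h : dd^-1 < (trunc dd^-1).+1%:R by apply: truncnS_gt.
rewrite -[X in _ < X]invrK ltf_pV2 ?posrE ?invr_gt0 //.
Qed.

Lemma lim_le (R : realType) (x c : R) : (forall m : nat, x < c + m.+1%:R^-1) -> x <= c.
Proof.
move=> h; rewrite leNgt; apply/negP => cx.
have [N hN] := @small_inv R (x - c) (ltac:(by rewrite subr_gt0)).
move: (h N) hN; move: (N.+1%:R^-1) => z; lra.
Qed.

Lemma grid_floor (R : realType) (t : R) (N : nat) : 0 <= t <= 1 ->
  let k := trunc (t * N.+1%:R) in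
  [/\ (k < N.+2)%N, 0 <= k%:R / N.+1%:R :> R, k%:R / N.+1%:R <= t &
     t - k%:R / N.+1%:R < N.+1%:R^-1].
Proof.
move=> /andP [t0 t1] k.
have K0 : 0 < N.+1%:R :> R by rewrite ltr0n.
have tK0 : 0 <= t * N.+1%:R by rewrite mulr_ge0 // ltW.
have kle : k%:R <= t * N.+1%:R by rewrite truncn_le.
have klt : t * N.+1%:R < k.+1%:R by apply: truncnS_gt.
split.
- rewrite -(ltr_nat R); apply: (le_lt_trans kle).
  have : t * N.+1%:R <= N.+1%:R by rewrite ler_piMl // ltW.
  rewrite -[N.+2%:R]natr1; lra.
- by rewrite divr_ge0 // ltW.
- by rewrite ler_pdivrMr.
- rewrite -(ltr_pM2r K0) mulrBl divfK ?gt_eqF // mulVf ?gt_eqF //.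
  move: klt; rewrite -natr1; lra.
Qed.


Section Meas.
Context {d : measure_display} {T : measurableType d} {R : realType}.

Lemma meas_L (Z : R -> T -> R) (c q : R) :
  (forall r c : R, 0 <= r <= 1 -> measurable [set w | Z r w < c]) ->
  (forall w (t e : R), 0 <= t <= 1 -> 0 < e -> exists2 dd : R, 0 < dd &
     forall y : R, 0 <= y <= 1 -> `|y - t| < dd -> `|Z y w - Z t w| < e) ->
  (forall w, exists2 m : R, 0 <= m <= q & forall y : R, 0 <= y <= q -> Z m w <= Z y w) ->
  0 <= q <= 1 ->
  measurable [set w | exists t : R, 0 <= t <= q /\ Z t w <= c].
Proof.
move=> hm hc hmin /andP [q0 q1].
have -> : [set w | exists t : R, 0 <= t <= q /\ Z t w <= c] =
  \bigcap_m \bigcup_N \bigcup_(k in [set k | (k < N.+2)%N /\ k%:R / N.+1%:R <= q])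
     [set w | Z (k%:R / N.+1%:R) w < c + m.+1%:R^-1].
  apply/seteqP; split => w /=.
    move=> [t [/andP [t0 tq] Zt]] m _.
    have t01 : 0 <= t <= 1 by rewrite t0 (le_trans tq q1).
    have [dd dd0 hdd] := hc w t m.+1%:R^-1 t01 (ltac:(by rewrite invr_gt0 ltr0n)).
    have [N hN] := @small_inv R dd dd0.
    have [kN g0 gt tg] := @grid_floor R t N t01.
    exists N => //; exists (trunc (t * N.+1%:R)); first by split => //; apply: le_trans gt tq.
    rewrite /=.
    set g := (trunc (t * N.+1%:R))%:R / N.+1%:R in g0 gt tg *.
    have g1 : 0 <= g <= 1 by rewrite g0 (le_trans gt (le_trans tq q1)).
    have hgt : `|g - t| < dd.
      rewrite distrC ger0_norm ?subr_ge0 //; apply: lt_trans tg hN.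
    have := hdd g g1 hgt => /(le_lt_trans (ler_norm _)).
    move: Zt; move: (m.+1%:R^-1) => z; lra.
  move=> h.
  have [m0 /andP [m00 m0q] hmin'] := hmin w.
  exists m0; split; first by rewrite m00.
  apply: lim_le => m.
  have [N _ [k [kN kq] /= hk]] := h m I.
  apply: le_lt_trans hk; apply: hmin'.
  by rewrite kq andbT divr_ge0.
apply: bigcapT_measurable => m; apply: bigcupT_measurable => N.
apply: bigcup_measurable => k [kN kq]; apply: hm.
by rewrite divr_ge0 //= (le_trans kq q1).
Qed.
End Meas.
Section Proc.
Context {d : measure_display} {T : measurableType d} {R : realType}.
Variable X : R -> T -> R.
Hypothesis hX : forall t : R, 0 <= t <= 1 -> measurable_fun setT (X t).
Hypothesis hC : forall w, {within `[0, 1]%classic, continuous (fun t : R => X t w)}.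

Lemma measX_lt (r c : R) : 0 <= r <= 1 -> measurable [set w | X r w < c].
Proof.
move=> hr; have := hX r hr measurableT _ (@measurable_itv R `]-oo, c[%R).
rewrite setTI; congr measurable; apply/seteqP; split => w /=; rewrite in_itv //=.
Qed.

Lemma measX_gt (r c : R) : 0 <= r <= 1 -> measurable [set w | c < X r w].
Proof.
move=> hr; have := hX r hr measurableT _ (@measurable_itv R `]c, +oo[%R).
rewrite setTI; congr measurable; apply/seteqP; split => w /=; rewrite in_itv /= ?andbT //.
Qed.

Lemma measX_in (r a b : R) : 0 <= r <= 1 -> measurable (X r @^-1` `]a, b[%classic).
Proof.
move=> hr; have := hX r hr measurableT _ (@measurable_itv R `]a, b[%R).
by rewrite setTI.
Qed.

Lemma contX w (t e : R) : 0 <= t <= 1 -> 0 < e -> exists2 dd : R, 0 < dd &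
     forall y : R, 0 <= y <= 1 -> `|y - t| < dd -> `|X y w - X t w| < e.
Proof.
move=> ht e0.
have := hC w t; rewrite /continuous_at.
have [_|] := nbhs_subspaceP (`[0, 1]%classic : set R) t; last first.
  by rewrite /= in_itv /= ht.
move=> /cvgrPdist_lt /(_ e e0).
rewrite /= near_withinE /= => /nbhs_ballP [dd /= dd0 H].
exists dd => // y hy yt.
have := H y; rewrite /ball /= distrC => /(_ yt).
by rewrite distrC; apply; rewrite /= in_itv /= hy.
Qed.


Definition upcS (a b : R) := [set w | exists t s : R,
  [/\ 0 <= t, t < s, s <= 1, X t w <= a & b <= X s w]].

Lemma hminX w (q : R) : 0 <= q <= 1 ->
  exists2 m : R, 0 <= m <= q & forall y : R, 0 <= y <= q -> X m w <= X y w.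
Proof.
move=> /andP [q0 q1].
have sub : (`[0, q]%classic : set R) `<=` `[0, 1]%classic.
  by move=> y /=; rewrite !in_itv /= => /andP [-> /le_trans ->].
have [c] := EVT_min q0 (continuous_subspaceW sub (hC w)).
rewrite in_itv /= => cq hc; exists c => // y hy; apply: hc; by rewrite in_itv.
Qed.

Lemma hmaxX w (q : R) : 0 <= q <= 1 ->
  exists2 m : R, q <= m <= 1 & forall y : R, q <= y <= 1 -> X y w <= X m w.
Proof.
move=> /andP [q0 q1].
have sub : (`[q, 1]%classic : set R) `<=` `[0, 1]%classic.
  by move=> y /=; rewrite !in_itv /= => /andP [/(le_trans q0) -> ->].
have [c] := EVT_max q1 (continuous_subspaceW sub (hC w)).
rewrite in_itv /= => cq hc; exists c => // y hy; apply: hc; by rewrite in_itv.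
Qed.

Lemma meas_upc (a b : R) : a < b -> measurable (upcS a b).
Proof.
move=> ab.
pose Z := fun (t : R) w => - X (1 - t) w.
have -> : upcS a b = \bigcup_N \bigcup_(k in [set k | (k < N.+2)%N])
   ([set w | exists t : R, 0 <= t <= k%:R / N.+1%:R /\ X t w <= a] `&`
    [set w | exists t : R, 0 <= t <= 1 - k%:R / N.+1%:R /\ Z t w <= - b]).
  apply/seteqP; split => w /=.
    move=> [t [s [t0 ts s1 ta bs]]].
    have [N hN] := @small_inv R (s - t) (ltac:(by rewrite subr_gt0)).
    have s01 : 0 <= s <= 1 by rewrite s1 andbT (le_trans t0 (ltW ts)).
    have [kN g0 gs sg] := @grid_floor R s N s01.
    exists N => //; exists (trunc (s * N.+1%:R)) => //.
    set g := (trunc (s * N.+1%:R))%:R / N.+1%:R in g0 gs sg *.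
    split.
      exists t; split => //; rewrite t0 /=.
      by move: sg hN; move: (N.+1%:R^-1) => z; lra.
    clearbody g.
    exists (1 - s); split; first by apply/andP; split; lra.
    by rewrite /Z (_ : 1 - (1 - s) = s) ?lerN2 //; lra.
  move=> [N _ [k kN]]; move: (k%:R / N.+1%:R) => g.
  move=> [[t [/andP [t0 tg] ta]] [s' [/andP [s0 sg] zs]]].
  exists t, (1 - s'); split => //.
  - have tle : t <= 1 - s' by apply: (le_trans tg); lra.
    rewrite lt_neqAle tle andbT; apply/eqP => ts.
    by move: zs; rewrite /Z -ts lerN2 => bt; lra.
  - lra.
  - by move: zs; rewrite /Z lerN2.
apply: bigcupT_measurable => N; apply: bigcup_measurable => k kN.
have g01 : 0 <= (k%:R / N.+1%:R : R) <= 1.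
  apply/andP; split; first by rewrite divr_ge0.
  by rewrite ler_pdivrMr ?ltr0n // mul1r ler_nat -ltnS; exact: kN.
move: (k%:R / N.+1%:R) g01 => g g01.
apply: measurableI.
  apply: meas_L => //.
  - by move=> r c hr; apply: measX_lt.
  - by move=> w t e ht he; apply: contX.
  - by move=> w; apply: hminX; move: g01; rewrite /= => /andP [? ?]; apply/andP.
apply: meas_L.
- move=> r c hr.
  have -> : [set w | Z r w < c] = [set w | - c < X (1 - r) w].
    by apply/seteqP; split => w /=; rewrite /Z ltrNl.
  by apply: measX_gt; apply/andP; move: hr => /andP [? ?]; split; lra.
- move=> w t e ht he.
  have ht' : 0 <= 1 - t <= 1 by move: ht => /andP [? ?]; apply/andP; split; lra.
  have [dd dd0 hdd] := contX w _ _ ht' he.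
  exists dd => // y hy yt; rewrite /Z -opprD normrN.
  apply: hdd; first by move: hy => /andP [? ?]; apply/andP; split; lra.
  by rewrite opprB addrC addrA subrK distrC.
- move=> w.
  have [m /andP [gm m1] hm] := hmaxX w _ g01.
  exists (1 - m); first by apply/andP; split; lra.
  move=> y /andP [y0 y1]; rewrite /Z lerN2 (_ : 1 - (1 - m) = m); last by lra.
  by apply: hm; apply/andP; split; lra.
- by move: g01 => /andP [? ?]; apply/andP; split; lra.
Qed.


Lemma approx_pair w (dl th t s : R) : 0 <= t -> t <= s -> s <= 1 -> s - t <= dl ->
  th < `|X t w - X s w| ->
  exists N k1 k2, [/\ (k1 < N.+2)%N, (k2 < N.+2)%N,
    `|k1%:R / N.+1%:R - k2%:R / N.+1%:R| <= dl &
    th < `|X (k1%:R / N.+1%:R) w - X (k2%:R / N.+1%:R) w| ].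
Proof.
move=> t0 ts s1 std hth.
set D := `|X t w - X s w|.
set ga := (D - th) / 2.
have ga0 : 0 < ga by rewrite divr_gt0 // subr_gt0.
have t01 : 0 <= t <= 1 by rewrite t0 (le_trans ts s1).
have s01 : 0 <= s <= 1 by rewrite s1 (le_trans t0 ts).
have [d1 d10 h1] := contX w _ _ t01 ga0.
have [d2 d20 h2] := contX w _ _ s01 ga0.
have [N hN] := @small_inv R (minr d1 d2) (ltac:(by rewrite lt_min d10 d20)).
move: hN; rewrite lt_min => /andP [hN1 hN2].
have [jN gj0 gjt tgj] := @grid_floor R t N t01.
have [kN gk0 gks sgk] := @grid_floor R s N s01.
set j := trunc (t * N.+1%:R) in jN gj0 gjt tgj.
set ks := trunc (s * N.+1%:R) in kN gk0 gks sgk.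
have K0 : 0 < N.+1%:R :> R by rewrite ltr0n.
have gS : j.+1%:R / N.+1%:R = j%:R / N.+1%:R + N.+1%:R^-1 :> R.
  by rewrite -natr1 mulrDl mul1r.
have gmono (p q : nat) : (p <= q)%N -> p%:R / N.+1%:R <= q%:R / N.+1%:R :> R.
  by move=> pq; rewrite ler_pM2r ?invr_gt0 // ler_nat.
have key : forall k1 : nat, (k1 <= ks)%N ->
   `|k1%:R / N.+1%:R - t| < d1 -> s - t <= dl ->
   ks%:R / N.+1%:R - k1%:R / N.+1%:R <= dl ->
   exists N k1 k2, [/\ (k1 < N.+2)%N, (k2 < N.+2)%N,
    `|k1%:R / N.+1%:R - k2%:R / N.+1%:R| <= dl &
    th < `|X (k1%:R / N.+1%:R) w - X (k2%:R / N.+1%:R) w| ].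
  move=> k1 k1ks hk1 _ hd.
  exists N, k1, ks; split => //.
  - by apply: leq_ltn_trans kN.
  - by rewrite distrC ger0_norm // subr_ge0 gmono.
  have g101 : 0 <= (k1%:R / N.+1%:R : R) <= 1.
    by rewrite divr_ge0 //= (le_trans (gmono _ _ k1ks) (le_trans gks s1)).
  have gk01 : 0 <= (ks%:R / N.+1%:R : R) <= 1 by rewrite gk0 (le_trans gks s1).
  have e1 := h1 _ g101 hk1.
  have e2 : `|X (ks%:R / N.+1%:R) w - X s w| < ga.
    apply: h2 => //; rewrite distrC ger0_norm ?subr_ge0 //; exact: lt_trans sgk hN2.
  have hga : D - 2 * ga = th by rewrite /ga mulrC divfK ?pnatr_eq0 //; lra.
  move: e1 e2 hga; rewrite /D.
  move: (X (k1%:R / N.+1%:R) w) (X (ks%:R / N.+1%:R) w) (X t w) (X s w) => x1 x2 x3 x4.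
  move=> e1 e2 hga.
  have tri : `|x3 - x4| <= `|x1 - x3| + `|x1 - x2| + `|x2 - x4|.
    have -> : x3 - x4 = (x3 - x1) + (x1 - x2) + (x2 - x4) by ring.
    rewrite (distrC x1 x3).
    apply: (le_trans (ler_normD _ _)); rewrite lerD2r; exact: ler_normD.
  move: tri e1 e2 hga; move: `|x3 - x4| `|x1 - x3| `|x1 - x2| `|x2 - x4| => A B C E.
  lra.
have [jks|ksj] := leqP j.+1 ks.
  apply: (key j.+1 jks) => //.
    rewrite gS ger0_norm; last by move: tgj; move: (N.+1%:R^-1) (j%:R / N.+1%:R) => z g; lra.
    by move: gjt hN1; move: (N.+1%:R^-1) (j%:R / N.+1%:R) => z g; lra.
  move: (gmono _ _ jks); rewrite gS.
  by move: tgj sgk gks std; move: (N.+1%:R^-1) (j%:R / N.+1%:R) (ks%:R / N.+1%:R) => z g g'; lra.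
apply: (key ks (leqnn _)) => //.
  have := gmono _ _ (ltnSE ksj).
  move: tgj sgk gks gjt hN1 ts; move: (N.+1%:R^-1) (j%:R / N.+1%:R) (ks%:R / N.+1%:R) => z g g'.
  move=> *; rewrite ltr_norml; apply/andP; split; lra.
by rewrite subrr; apply: le_trans std; rewrite subr_ge0.
Qed.


Lemma measX_dist (r1 r2 c : R) : 0 <= r1 <= 1 -> 0 <= r2 <= 1 ->
  measurable [set w | c < `|X r1 w - X r2 w|].
Proof.
move=> h1 h2.
have mf : measurable_fun setT (fun w => `|X r1 w - X r2 w|).
  apply: (measurableT_comp (@measurable_realfun.normr_measurable R setT)).
  exact: measurable_realfun.measurable_funB (hX r1 h1) (hX r2 h2).
have := mf measurableT _ (@measurable_itv R `]c, +oo[%R).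
rewrite setTI; congr measurable; apply/seteqP; split => w /=; rewrite in_itv /= ?andbT //.
Qed.

Lemma meas_mod (dl th : R) : measurable [set w | (th%:E <= modulus X dl w)%E].
Proof.
have -> : [set w | (th%:E <= modulus X dl w)%E] =
  \bigcap_m \bigcup_N \bigcup_(k1 in [set k | (k < N.+2)%N])
    \bigcup_(k2 in [set k | (k < N.+2)%N /\ `|k1%:R / N.+1%:R - k%:R / N.+1%:R| <= dl])
    [set w | th - m.+1%:R^-1 < `|X (k1%:R / N.+1%:R) w - X (k2%:R / N.+1%:R) w|].
  apply/seteqP; split => w /=.
    move=> hM m _.
    have : ((th - m.+1%:R^-1)%:E < modulus X dl w)%E.
      apply: lt_le_trans hM; rewrite lte_fin gtrDl oppr_lt0 invr_gt0 ltr0n //.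
    move=> /ereal_sup_gt [_ [t [s [ht hs hts ->]]]]; rewrite lte_fin => hth.
    move: ht hs => /andP [t0 t1] /andP [s0 s1].
    have [ts|st] := leP t s.
      have std : s - t <= dl by rewrite distrC in hts; exact: le_trans (ler_norm _) hts.
      have [N [k1 [k2 [k1N k2N hd hX12]]]] := approx_pair w _ _ _ _ t0 ts s1 std hth.
      by exists N => //; exists k1 => //; exists k2.
    rewrite distrC in hth.
    have tsd : t - s <= dl by exact: le_trans (ler_norm _) hts.
    have [N [k1 [k2 [k1N k2N hd hX12]]]] := approx_pair w _ _ _ _ s0 (ltW st) t1 tsd hth.
    exists N => //; exists k2 => //; exists k1; first by split => //; rewrite distrC.
    by rewrite /= distrC.
  move=> h.
  have hm m : ((th - m.+1%:R^-1)%:E < modulus X dl w)%E.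
    have [N _ [k1 k1N [k2 [k2N hd] /= hk]]] := h m I.
    have g1 : 0 <= (k1%:R / N.+1%:R : R) <= 1.
      by rewrite divr_ge0 //= ler_pdivrMr ?ltr0n // mul1r ler_nat -ltnS.
    have g2 : 0 <= (k2%:R / N.+1%:R : R) <= 1.
      by rewrite divr_ge0 //= ler_pdivrMr ?ltr0n // mul1r ler_nat -ltnS.
    apply: (lt_le_trans _ (@mod_le R T X dl w _ _ g1 g2 hd)); by rewrite lte_fin.
  move: hm; case: (modulus X dl w) => [r| |] hm.
  - rewrite lee_fin; apply: lim_le => m; have := hm m; rewrite lte_fin.
    by move: (m.+1%:R^-1) => z; lra.
  - exact: leey.
  - by have := hm 0%N; rewrite ltNge leNye.
apply: bigcapT_measurable => m; apply: bigcupT_measurable => N.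
apply: bigcup_measurable => k1 k1N; apply: bigcup_measurable => k2 [k2N _].
apply: measX_dist.
  by rewrite divr_ge0 //= ler_pdivrMr ?ltr0n // mul1r ler_nat -ltnS.
by rewrite divr_ge0 //= ler_pdivrMr ?ltr0n // mul1r ler_nat -ltnS.
Qed.

End Proc.

Lemma bigU_bound {d : measure_display} {T : measurableType d} {R : realType}
  (P : probability T R) (F : nat -> set T) (eps : R) :
  (forall k, measurable (F k)) -> (forall k, (P (F k) <= eps%:E)%E) ->
  forall m, measurable (\big[setU/set0]_(0 <= k < m) F k) /\
    (P (\big[setU/set0]_(0 <= k < m) F k) <= (m%:R * eps)%:E)%E.
Proof.
move=> mF hF; elim => [|m [IHm IHp]].
  rewrite big_geq //; split; first exact: measurable0.
  by rewrite measure0 mul0r.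
rewrite big_nat_recr //=; split; first exact: measurableU.
apply: (le_trans (measureU2 _ IHm (mF m))).
have -> : (m.+1%:R * eps = m%:R * eps + eps)%R by rewrite -natr1 mulrDl mul1r.
by rewrite EFinD; apply: leeD => //; exact: hF.
Qed.

Lemma bigU_mem {T : Type} (F : nat -> set T) (m k : nat) w :
  (k < m)%N -> F k w -> (\big[setU/set0]_(0 <= k < m) F k) w.
Proof.
elim: m => [//|m IH] km Fk.
rewrite big_nat_recr //=.
move: km; rewrite ltnS leq_eqVlt => /orP [/eqP kE|km]; first by right; rewrite -kE.
by left; apply: IH.
Qed.



Theorem lemma4p20 (R : realType) (alpha C : R) :
  0 < alpha -> 0 < C ->
  exists K : R, 0 < K /\
  forall (d : measure_display) (T : measurableType d) (P : probability T R)
         (beta a b eps : R) (X : R -> T -> R),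
    0 < beta -> a < b ->
    (forall t, 0 <= t <= 1 -> measurable_fun setT (X t)) ->
    (forall w, {within `[0, 1]%classic, continuous (fun t : R => X t w)}) ->
    (forall t, 0 <= t <= 1 -> (P (X t @^-1` `]a, b[%classic) <= eps%:E)%E) ->
    (forall theta delta : R, 0 < theta -> 0 < delta ->
       (P [set w | (theta%:E <= modulus X delta w)%E]
         <= (C * (delta `^ alpha) / (theta `^ beta))%:E)%E) ->
    (P [set w | (1 <= upcrossings X a b w)%E]
       <= (K * (eps `^ alpha / (b - a) `^ beta) `^ (alpha + 1)^-1)%:E)%E.
Proof.
move=> al0 C0; exists (C + 3); split; first by rewrite addr_gt0.
move=> d T P beta a b eps X be0 ab hX hC hI hM.
have hX' : forall t : R, 0 <= t <= 1 -> measurable_fun setT (X t) := hX.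
have -> : [set w | (1 <= upcrossings X a b w)%E] = upcS X a b.
  by apply/seteqP; split => w /= /upc_eq.
have mA := meas_upc X hX' hC a b ab.
have [p hp] : exists p : R, P (upcS X a b) = p%:E.
  by exists (fine (P (upcS X a b))); rewrite fineK // fin_num_measure.
rewrite hp.
set th := b - a.
have th0 : 0 < th by rewrite subr_gt0.
set u := (th `^ beta)^-1.
have u0 : 0 < u by rewrite invr_gt0 powR_gt0.
have e0 : 0 <= eps.
  have := hI 0 (ltac:(by rewrite lexx ler01)).
  by rewrite -lee_fin; apply: le_trans; apply: measure_ge0.
have p0 : 0 <= p by rewrite -lee_fin -hp measure_ge0.
apply: arith => //.
- have -> : C * u = C * 1 `^ alpha / th `^ beta by rewrite powR1 mulr1.
  rewrite -lee_fin -hp.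
  apply: (le_trans _ (hM th 1 th0 ltr01)).
  apply: le_measure; rewrite ?inE //; first exact: (meas_mod X hX' hC).
  move=> w [t [s [t0 ts s1 ta bs]]] /=.
  apply: (le_trans _ (@mod_le R T X 1 w s t _ _ _)).
  + rewrite lee_fin /th; apply: (le_trans _ (ler_norm _)); lra.
  + by rewrite (le_trans t0 (ltW ts)) s1.
  + by rewrite t0 (le_trans (ltW ts) s1).
  + rewrite ger0_norm; lra.
- move=> n.
  set dl : R := n.+1%:R^-1.
  have dl0 : 0 < dl by rewrite invr_gt0 ltr0n.
  pose F := fun k : nat => if (k < n.+2)%N then X (k%:R / n.+1%:R) @^-1` `]a, b[%classic else set0.
  have gk k : (k < n.+2)%N -> 0 <= (k%:R / n.+1%:R : R) <= 1.
    by move=> kn; rewrite divr_ge0 //= ler_pdivrMr ?ltr0n // mul1r ler_nat -ltnS.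
  have mF k : measurable (F k).
    rewrite /F; case: ifP => kn //.
    by have := hX' _ (gk k kn) measurableT _ (@measurable_itv R `]a, b[%R); rewrite setTI.
  have hF k : (P (F k) <= eps%:E)%E.
    rewrite /F; case: ifP => kn; first exact: hI (gk k kn).
    by rewrite measure0 lee_fin.
  have [mG hG] := bigU_bound P F eps mF hF n.+2.
  have mMd := meas_mod X hX' hC dl th.
  have sub : upcS X a b `<=` [set w | (th%:E <= modulus X dl w)%E] `|`
      \big[setU/set0]_(0 <= k < n.+2) F k.
    move=> w [t [s [t0 ts s1 ta bs]]].
    have [hm|hm] := pselect (th%:E <= modulus X dl w)%E; first by left.
    right.
    have hk := @not_mod R T X th dl w hm.
    have [k [kn hk2]] := @cover_path R (fun t => X t w) a b n t s t0 ts s1 ta bs hk.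
    apply: (@bigU_mem _ F n.+2 k) => //.
    by rewrite /F ifT //= in_itv /=.
  rewrite -lee_fin -hp.
  apply: (le_trans (le_measure _ _ _ sub)); rewrite ?inE //; first exact: measurableU.
  apply: (le_trans (measureU2 _ mMd mG)).
  rewrite [X in (_ <= X)%E]EFinD; apply: leeD => //.
  have -> : C * u * dl `^ alpha = C * dl `^ alpha / th `^ beta by rewrite mulrAC.
  exact: hM.
Qed.
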